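(* Let $\omega$ be a non-quasianalytic subadditive weight function, let $u\in\mathcal{S}'_\omega(\mathbb R^d)$, $\varphi\in\mathcal{S}_\omega(\mathbb R^d)\setminus\{0\}$, let $\Lambda=\alpha\mathbb Z^d\times\beta\mathbb Z^d$ with $\alpha,\beta>0$, and let $\Gamma\subseteq\mathbb R^{2d}\setminus\{0\}$ be an open conic set. Then $$\sup_{\sigma\in\Lambda\cap\Gamma}e^{\lambda\omega(\sigma)}|\langle u,\Pi(\sigma)\varphi\rangle|<+\infty\quad\forall\lambda>0$$ holds if and only if $$\sum_{\sigma\in\Lambda\cap\Gamma}e^{\lambda\omega(\sigma)}|\langle u,\Pi(\sigma)\varphi\rangle|^2<+\infty\quad\forall\lambda>0.$$
   Context: A non-quasianalytic subadditive weight function is a continuous increasing function $\omega:[0,+\infty)\to[0,+\infty)$ such that: ($\alpha$) $\omega(t_1+t_2)\le\omega(t_1)+\omega(t_2)$ for all $t_1,t_2\ge0$; ($\beta$) $\int_1^{+\infty}\omega(t)t^{-2}\,dt<+\infty$; ($\gamma$) there exist $a\in\mathbb R$, $b>0$ with $\omega(t)\ge a+b\log(1+t)$ for all $t\ge0$; ($\delta$) $\varphi(t):=\omega(e^t)$ is convex. For $\zeta$ in $\mathbb R^n$ or $\mathbb C^n$ one writes $\omega(\zeta):=\omega(|\zeta|)$ with $|\cdot|$ the Euclidean norm. The space $\mathcal{S}_\omega(\mathbb R^d)$ is the set of Schwartz functions $f$ such that for all $\lambda>0$ and $\alpha\in\mathbb N_0^d$, $\sup_x|D^\alpha f(x)|e^{\lambda\omega(x)}<\infty$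 and $\sup_\xi|D^\alpha\hat f(\xi)|e^{\lambda\omega(\xi)}<\infty$, where $\hat f(\xi)=\int f(x)e^{-ix\cdot\xi}dx$; $\mathcal{S}'_\omega(\mathbb R^d)$ is its strong dual, with the duality $\langle\cdot,\cdot\rangle$ conjugate-linear in the second argument (extending the $L^2$ inner product). For $z=(x,\xi)\in\mathbb R^{2d}$, $\Pi(z)f(t)=e^{it\cdot\xi}f(t-x)$. *)

(* Defs.v *)
From mathcomp Require Import all_boot all_order all_algebra.
From mathcomp Require Import all_classical all_reals all_analysis.
From mathcomp Require Import complex.

Set Implicit Arguments.
Unset Strict Implicit.
Unset Printing Implicit Defensive.

Import Order.TTheory GRing.Theory Num.Theory numFieldNormedType.Exports.
Local Open Scope classical_set_scope.
Local Open Scope ring_scope.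

Section Defs.
Variable R : realType.
Local Notation C := R[i].
Local Notation vec d := 'rV[R]_d.

Definition cmod (z : C) : R := Num.sqrt (complex.Re z ^+ 2 + complex.Im z ^+ 2).

Definition dotp d (x y : vec d) : R := \sum_(j < d) x 0 j * y 0 j.
Definition enorm d (x : vec d) : R := Num.sqrt (dotp x x).
Definition enorm2 d (z : vec d * vec d) : R :=
  Num.sqrt (dotp z.1 z.1 + dotp z.2 z.2).

Definition weight_function (om : R -> R) : Prop :=
  {within [set t : R | 0 <= t], continuous om} /\
  (forall t, 0 <= t -> 0 <= om t) /\
  (forall s t, 0 <= s -> s <= t -> om s <= om t) /\
  (forall s t, 0 <= s -> 0 <= t -> om (s + t) <= om s + om t) /\
  (\int[lebesgue_measure]_(t in `[1%R, +oo[%classic) ((om t / t ^+ 2)%:E)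
     < +oo)%E /\
  (exists a b : R, 0 < b /\ forall t, 0 <= t -> a + b * ln (1 + t) <= om t) /\
  (forall s t th : R, 0 <= th -> th <= 1 ->
     om (expR (th * s + (1 - th) * t)) <= th * om (expR s) + (1 - th) * om (expR t)).

Definition pder d (j : 'I_d) (g : vec d -> R) : vec d -> R :=
  fun x => 'D_(delta_mx 0 j) g x.

Definition Dseq d (s : seq 'I_d) (g : vec d -> R) : vec d -> R :=
  foldr (@pder d) g s.

Definition smooth d (g : vec d -> R) : Prop :=
  forall s : seq 'I_d,
    continuous (Dseq s g) /\
    forall (j : 'I_d) (x : vec d), derivable (Dseq s g) x (delta_mx 0 j).

Definition Dmulti d (al : 'I_d -> nat) (g : vec d -> R) : vec d -> R :=
  Dseq (flatten [seq nseq (al j) j | j <- enum 'I_d]) g.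

Definition ReF d (f : vec d -> C) : vec d -> R := fun x => complex.Re (f x).
Definition ImF d (f : vec d -> C) : vec d -> R := fun x => complex.Im (f x).

Definition Dc d (al : 'I_d -> nat) (f : vec d -> C) : vec d -> C :=
  fun x => Complex (Dmulti al (ReF f) x) (Dmulti al (ImF f) x).

Definition monom d (be : 'I_d -> nat) (x : vec d) : R :=
  \prod_(j < d) x 0 j ^+ be j.

Definition schwartz d (f : vec d -> C) : Prop :=
  smooth (ReF f) /\ smooth (ImF f) /\
  forall al be : 'I_d -> nat, exists M : R, forall x,
    `|monom be x| * cmod (Dc al f x) <= M.

(* Lebesgue integral over R^d, computed as an iterated integral
   (equal to the Lebesgue integral on R^d for integrable functions, Fubini) *)
Fixpoint intRd (d : nat) : (vec d -> R) -> R :=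
  match d return (vec d -> R) -> R with
  | 0 => fun F => F 0
  | d'.+1 => fun F =>
      Rintegral lebesgue_measure setT
        (fun t : R => intRd (fun y : vec d' => F (row_mx (const_mx t : 'rV[R]_1) y : 'rV[R]_(1 + d'))))
  end.

Definition fourier d (f : vec d -> C) : vec d -> C :=
  fun xi => Complex
    (intRd (fun x => ReF f x * cos (dotp x xi) + ImF f x * sin (dotp x xi)))
    (intRd (fun x => ImF f x * cos (dotp x xi) - ReF f x * sin (dotp x xi))).

Definition in_Sw (om : R -> R) d (f : vec d -> C) : Prop :=
  schwartz f /\
  forall lam : R, 0 < lam -> forall al : 'I_d -> nat,
    (exists M : R, forall x, cmod (Dc al f x) * expR (lam * om (enorm x)) <= M) /\
    (exists M : R, forall xi,
        cmod (Dc al (fourier f) xi) * expR (lam * om (enorm xi)) <= M).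

(* the dual S'_omega(R^d): continuous functionals u, with
   <u, f> := u f conjugate-linear in f.  Continuity is w.r.t. the
   Frechet topology of S_omega given by the seminorms
   sup_{|al|<=N} (sup_x |D^al f| e^{lam om} + sup_xi |D^al fhat| e^{lam om}). *)
Definition in_Sw_dual (om : R -> R) d (u : (vec d -> C) -> C) : Prop :=
  (forall f g, in_Sw om f -> in_Sw om g -> u (fun x => f x + g x) = u f + u g) /\
  (forall (c : C) f, in_Sw om f -> u (fun x => c * f x) = conjc c * u f) /\
  exists (K lam : R) (N : nat), 0 < K /\ 0 < lam /\
    forall f, in_Sw om f -> forall M : R,
      (forall al : 'I_d -> nat, (\sum_(j < d) al j <= N)%N ->
         (forall x, cmod (Dc al f x) * expR (lam * om (enorm x)) <= M) /\
         (forall xi, cmod (Dc al (fourier f) xi) * expR (lam * om (enorm xi)) <= M)) ->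
      cmod (u f) <= K * M.

Definition tfshift d (z : vec d * vec d) (f : vec d -> C) : vec d -> C :=
  fun t => Complex (cos (dotp t z.2)) (sin (dotp t z.2)) * f (t - z.1).

Definition open_conic d (G : set (vec d * vec d)) : Prop :=
  open G /\ ~ G (0, 0) /\
  forall z, G z -> forall t : R, 0 < t -> G (t *: z.1, t *: z.2).

Definition latpt d (a b : R) (k l : 'rV[int]_d) : vec d * vec d :=
  (a *: map_mx (fun n : int => n%:~R) k, b *: map_mx (fun n : int => n%:~R) l).

End Defs.

(* Main.v *)
Require Import Defs.
From mathcomp Require Import all_boot all_order all_algebra.
From mathcomp Require Import all_classical all_reals all_analysis.
From mathcomp Require Import complex.
From mathcomp Require Import ring lra.

Import Order.TTheory GRing.Theory Num.Theory.
Local Open Scope classical_set_scope.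
Local Open Scope ring_scope.
Set Implicit Arguments.
Unset Strict Implicit.

Section Aux.
Variable R : realType.

Definition wt (i : nat) : R := ((i.+1 * i.+2)%:R)^-1.

Lemma wt_ge0 i : 0 <= wt i.
Proof. by rewrite /wt invr_ge0 ler0n. Qed.

Lemma sum_wt n : \sum_(i < n) wt i = 1 - (n.+1%:R)^-1.
Proof.
elim: n => [|n IH]; first by rewrite big_ord0 invr1 subrr.
rewrite big_ord_recr /= IH /wt natrM.
have h1 : (n.+1%:R : R) != 0 by rewrite pnatr_eq0.
have h2 : (n.+2%:R : R) != 0 by rewrite pnatr_eq0.
rewrite -addrA; congr (_ + _).
rewrite -[n.+2]addn1 natrD -[n.+1]addn1 natrD in h2 *.
rewrite -natrD addn1 in h1 *.
have p : (0:R) <= n%:R by rewrite ler0n.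
by field; apply/andP; split; apply/negP => /eqP; lra.
Qed.

Lemma sum_wt_le1 n : \sum_(i < n) wt i <= 1.
Proof. by rewrite sum_wt lerBlDr lerDl invr_ge0 ler0n. Qed.

Lemma sum_uniq_le (J : finType) (r : seq J) (H : J -> R) :
  uniq r -> (forall y, 0 <= H y) -> \sum_(y <- r) H y <= \sum_y H y.
Proof.
move=> ur H0; rewrite (big_uniq _ ur) /= [X in _ <= X](bigID (mem r)) /=.
by rewrite lerDl sumr_ge0.
Qed.

Definition enc (n : int) : nat :=
  match n with Posz m => m.*2 | Negz m => m.*2.+1 end.

Lemma enc_inj : injective enc.
Proof.
case=> m [] n /=.
- by move/(congr1 half); rewrite !doubleK => ->.
- by move/(congr1 odd); rewrite /= !odd_double.
- by move/(congr1 odd); rewrite /= !odd_double.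
- by move=> [] /(congr1 half); rewrite !doubleK => ->.
Qed.

Lemma enc_bound (n : int) : ((enc n).+2%:R : R) <= 2 * (`|n%:~R : R| + 1).
Proof.
case: n => m /=.
  rewrite -pmulrn ger0_norm ?ler0n // -[m.*2.+2]addn2 -muln2 natrD natrM.
  have : (0:R) <= m%:R by rewrite ler0n.
  lra.
have -> : ((Negz m)%:~R : R) = - (m.+1)%:R by rewrite NegzE mulrNz.
rewrite normrN ger0_norm ?ler0n //.
rewrite -[m.*2.+3]addn3 -muln2 -[m.+1]addn1 natrD natrM natrD.
have : (0:R) <= m%:R by rewrite ler0n.
lra.
Qed.


Lemma coord1_le d (z : 'rV[R]_d * 'rV[R]_d) j : `|z.1 0 j| <= enorm2 z.
Proof.
rewrite /enorm2 -sqrtr_sqr ler_wsqrtr // /dotp (bigD1 j) //= -addrA lerDl.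
by rewrite addr_ge0 // sumr_ge0 // => i _; rewrite -expr2 sqr_ge0.
Qed.

Lemma coord2_le d (z : 'rV[R]_d * 'rV[R]_d) j : `|z.2 0 j| <= enorm2 z.
Proof.
rewrite /enorm2 -sqrtr_sqr ler_wsqrtr // /dotp.
rewrite [X in _ <= X]addrC (bigD1 j) //= -addrA lerDl.
by rewrite addr_ge0 // sumr_ge0 // => i _; rewrite -expr2 sqr_ge0.
Qed.

Lemma enorm2_ge0 d (z : 'rV[R]_d * 'rV[R]_d) : 0 <= enorm2 z.
Proof. exact: sqrtr_ge0. Qed.

Lemma latpt1 d (a b : R) (k l : 'rV[int]_d) j :
  (latpt a b k l).1 0 j = a * (k 0 j)%:~R.
Proof. by rewrite /latpt /= !mxE. Qed.

Lemma latpt2 d (a b : R) (k l : 'rV[int]_d) j :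
  (latpt a b k l).2 0 j = b * (l 0 j)%:~R.
Proof. by rewrite /latpt /= !mxE. Qed.


Lemma coord_bound (c cc t : R) (n : int) :
  0 < cc -> cc <= 1 -> cc <= c -> c * `|n%:~R : R| <= t ->
  cc ^+ 2 * (((enc n).+1 * (enc n).+2)%:R : R) <= 4 * (1 + t) ^+ 2.
Proof.
move=> cc0 cc1 ccc ht.
have hb := enc_bound n.
set y := `|n%:~R : R| in ht hb *.
have y0 : 0 <= y by rewrite normr_ge0.
set E : R := (enc n)%:R.
have E0 : 0 <= E by rewrite ler0n.
have -> : (((enc n).+1 * (enc n).+2)%:R : R) = (E + 1) * (E + 2).
  by rewrite natrM /E !mulrSr add0r; ring.
have hb' : E + 2 <= 2 * (y + 1) by move: hb; rewrite -addn2 natrD.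
have h1 : cc * (y + 1) <= 1 + t by nra.
have h2 : 0 <= cc * (y + 1) by nra.
have h3 : (cc * (y + 1)) ^+ 2 <= (1 + t) ^+ 2 by rewrite ler_pXn2r // ?nnegrE //; nra.
have h4 : (E + 1) * (E + 2) <= (E + 2) ^+ 2 by nra.
have h5 : (E + 2) ^+ 2 <= (2 * (y + 1)) ^+ 2 by rewrite ler_pXn2r // ?nnegrE //; nra.
have h6 : 0 <= cc ^+ 2 by rewrite sqr_ge0.
have : cc ^+ 2 * ((E + 1) * (E + 2)) <= cc ^+ 2 * ((2 * (y + 1)) ^+ 2).
  by rewrite ler_wpM2l //; apply: le_trans h4 h5.
move=> h7; apply: le_trans h7 _.
have -> : cc ^+ 2 * ((2 * (y + 1)) ^+ 2) = 4 * (cc * (y + 1)) ^+ 2 by ring.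
by rewrite ler_wpM2l.
Qed.

Lemma coord_bound' (c cc t : R) (n : int) :
  0 < cc -> cc <= 1 -> cc <= c -> c * `|n%:~R : R| <= t ->
  (((enc n).+1 * (enc n).+2)%:R : R) <= (4 / cc ^+ 2) * (1 + t) ^+ 2.
Proof.
move=> cc0 cc1 ccc ht; have h := coord_bound cc0 cc1 ccc ht.
have cc2 : 0 < cc ^+ 2 by rewrite exprn_gt0.
rewrite -(ler_pM2l cc2); apply: le_trans h _.
have cn : cc != 0 by rewrite gt_eqF.
suff -> : cc ^+ 2 * (4 / cc ^+ 2 * (1 + t) ^+ 2) = 4 * (1+t)^+2 by [].
by field.
Qed.

Definition Pk d (k l : 'rV[int]_d) : R :=
  \prod_(j < d) ((((enc (k 0 j)).+1 * (enc (k 0 j)).+2)%:R : R) *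
                 (((enc (l 0 j)).+1 * (enc (l 0 j)).+2)%:R)).

Lemma Pk_gt0 d (k l : 'rV[int]_d) : 0 < Pk k l.
Proof. by apply: prodr_gt0 => j _; rewrite mulr_gt0 // ltr0n muln_gt0. Qed.

Lemma Pk_bound d (a b cc : R) (k l : 'rV[int]_d) :
  0 < cc -> cc <= 1 -> cc <= a -> cc <= b ->
  Pk k l <= ((4 / cc ^+ 2) ^+ 2) ^+ d * (1 + enorm2 (latpt a b k l)) ^+ (4 * d).
Proof.
move=> cc0 cc1 cca ccb.
have a0 : 0 < a by apply: lt_le_trans cca.
have b0 : 0 < b by apply: lt_le_trans ccb.
set t := enorm2 _.
set X := (4 / cc ^+ 2) * (1 + t) ^+ 2.
have -> : ((4 / cc ^+ 2) ^+ 2) ^+ d * (1 + t) ^+ (4 * d) = \prod_(j < d) (X * X).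
  rewrite prodr_const card_ord exprM -exprMn; congr (_ ^+ _).
  by rewrite /X; ring.
apply: ler_prod => j _; apply/andP; split.
  by rewrite mulr_ge0 // ler0n.
apply: ler_pM; rewrite ?ler0n //.
  apply: coord_bound' cc0 cc1 cca _.
  have := coord1_le (latpt a b k l) j; rewrite latpt1 normrM gtr0_norm //.
apply: coord_bound' cc0 cc1 ccb _.
have := coord2_le (latpt a b k l) j; rewrite latpt2 normrM gtr0_norm //.
Qed.

Lemma wt_sum_pairs K : \sum_(p : 'I_K * 'I_K) (wt p.1 * wt p.2) <= 1.
Proof.
rewrite -(pair_bigA _ (fun i j : 'I_K => wt i * wt j)) /=.
under eq_bigr do rewrite -mulr_sumr.
rewrite -mulr_suml.
have h0 : 0 <= \sum_(i < K) wt i by rewrite sumr_ge0 // => i _; exact: wt_ge0.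
have h1 := sum_wt_le1 K.
by rewrite -[1]mulr1 ler_pM.
Qed.

Lemma seq_sum_bound d (s : seq ('rV[int]_d * 'rV[int]_d)) : uniq s ->
  \sum_(x <- s) (Pk x.1 x.2)^-1 <= 1.
Proof.
move=> us.
set N := \sum_(x <- s) \sum_(j < d) (enc (x.1 0%R j) + enc (x.2 0%R j)).
have hN : forall (x : 'rV[int]_d * 'rV[int]_d) (j : 'I_d), x \in s -> (enc (x.1 0%R j) < N.+1)%N /\ (enc (x.2 0%R j) < N.+1)%N.
  move=> x j xs; rewrite !ltnS.
  have h1 : (\sum_(j < d) (enc (x.1 0%R j) + enc (x.2 0%R j)) <= N)%N.
    by rewrite /N (bigD1_seq x) //= leq_addr.
  have h2 : (enc (x.1 0%R j) + enc (x.2 0%R j) <= N)%N.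
    by apply: leq_trans h1; rewrite (bigD1 j) //= leq_addr.
  by split; apply: leq_trans h2; rewrite ?leq_addr ?leq_addl.
pose phi (x : 'rV[int]_d * 'rV[int]_d) : {ffun 'I_d -> 'I_N.+1 * 'I_N.+1} :=
  [ffun j => (inord (enc (x.1 0%R j)), inord (enc (x.2 0%R j)))].
pose H (f : {ffun 'I_d -> 'I_N.+1 * 'I_N.+1}) : R :=
  \prod_(j < d) (wt (f j).1 * wt (f j).2).
have e1 : forall x, x \in s -> (Pk x.1 x.2)^-1 = H (phi x).
  move=> x xs; rewrite /Pk /H -prodfV; apply: eq_bigr => j _.
  rewrite ffunE /= !inordK; try by case: (hN x j xs).
  by rewrite invfM.
rewrite (eq_big_seq (fun x => H (phi x))); last by move=> x xs; exact: e1.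
rewrite -(big_map phi xpredT H).
have Hge0 : forall f, 0 <= H f.
  by move=> f; apply: prodr_ge0 => j _; rewrite mulr_ge0 // wt_ge0.
have U : uniq (map phi s).
  rewrite map_inj_in_uniq // => x y xs ys /ffunP e.
  have ex : forall j, x.1 0 j = y.1 0 j /\ x.2 0 j = y.2 0 j.
    move=> j; move: (e j); rewrite !ffunE => -[e1' e2'].
    have := congr1 val e1'; have := congr1 val e2'.
    rewrite /= !inordK; try by case: (hN x j xs); try by case: (hN y j ys).
    all: try (by case: (hN y j ys)).
    by move=> /enc_inj -> /enc_inj ->.
  case: x y xs ys ex {e} => [x1 x2] [y1 y2] _ _ ex /=.
  by congr pair; apply/rowP => j; case: (ex j).
apply: le_trans (sum_uniq_le U Hge0) _.
rewrite /H -(bigA_distr_bigA (fun (j : 'I_d) (p : 'I_N.+1 * 'I_N.+1) => wt p.1 * wt p.2)) /=.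
rewrite prodr_const card_ord.
apply: exprn_ile1; last exact: wt_sum_pairs.
by rewrite sumr_ge0 // => p _; rewrite mulr_ge0 // wt_ge0.
Qed.

Lemma key_exp (lam mu nu w c M : R) : lam = 2 * mu - nu -> 0 <= c ->
  expR (mu * w) * c <= M -> expR (lam * w) * c ^+ 2 <= M ^+ 2 * expR (- (nu * w)).
Proof.
move=> -> c0 hM.
have -> : expR ((2 * mu - nu) * w) * c ^+ 2 = (expR (mu * w) * c) ^+ 2 * expR (- (nu * w)).
  rewrite exprMn -expRM_natl mulrAC -expRD; congr (expR _ * _).
  by ring.
rewrite ler_wpM2r ?expR_ge0 // ler_pXn2r ?nnegrE ?mulr_ge0 ?expR_ge0 //.
by apply: le_trans hM; rewrite mulr_ge0 ?expR_ge0.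
Qed.

Lemma key_om (nu a0 b0 w t : R) (n : nat) : 0 <= nu -> nu * b0 = n%:R ->
  a0 + b0 * ln (1 + t) <= w -> 0 <= t ->
  expR (- (nu * w)) <= expR (- (nu * a0)) * ((1 + t) ^+ n)^-1.
Proof.
move=> nu0 hn hw t0.
apply: le_trans (_ : expR (- (nu * (a0 + b0 * ln (1 + t)))) <= _).
  by rewrite ler_expR lerN2 ler_wpM2l.
rewrite mulrDr opprD expRD; apply: ler_wpM2l; first exact: expR_ge0.
rewrite mulrA hn expRN expRM_natl lnK //.
by rewrite posrE; apply: lt_le_trans (ltr01) _; rewrite lerDl.
Qed.

Lemma key_P (T Q P : R) (n : nat) : 0 < P -> 0 < T -> 0 < Q ->
  P <= Q * T ^+ n -> (T ^+ n)^-1 <= Q * P^-1.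
Proof.
move=> P0 T0 Q0 hP.
have Tn : 0 < T ^+ n by rewrite exprn_gt0.
have -> : (T ^+ n)^-1 = Q * (Q * T ^+ n)^-1.
  by rewrite invfM mulrA mulfV ?mul1r // gt_eqF.
apply: ler_wpM2l; first exact: ltW.
by rewrite lef_pV2 // posrE mulr_gt0.
Qed.

Lemma esum_bound (T : choiceType) (S : set T) (f g : T -> R) (C : R) :
  (forall x, S x -> f x <= C * g x) -> 0 <= C ->
  (forall s : seq T, uniq s -> \sum_(x <- s) g x <= 1) ->
  (\esum_(x in S) (f x)%:E <= C%:E)%E.
Proof.
move=> hf C0 hg; apply: ge_ereal_sup => _ [A [finA AS] <-].
rewrite fsbig_finite // sumEFin lee_fin.
set s := finmap.enum_fset _.
have us : uniq s by exact: finmap.fset_uniq.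
apply: (@le_trans _ _ (\sum_(x <- s) C * g x)).
  rewrite big_seq [X in _ <= X]big_seq; apply: ler_sum => x.
  by rewrite in_fset_set // inE => /AS /hf.
by rewrite -mulr_sumr -[X in _ <= X]mulr1 ler_wpM2l // hg.

Qed.

End Aux.

Theorem lemma2p4 (R : realType) (d : nat) (om : R -> R)
  (u : ('rV[R]_d -> R[i]) -> R[i]) (phi : 'rV[R]_d -> R[i]) (a b : R)
  (G : set ('rV[R]_d * 'rV[R]_d)) :
  weight_function om ->
  in_Sw_dual om u ->
  in_Sw om phi -> phi <> (fun _ => 0) ->
  0 < a -> 0 < b ->
  open_conic G ->
  (forall lam : R, 0 < lam -> exists M : R,
     forall k l : 'rV[int]_d, G (latpt a b k l) ->
       expR (lam * om (enorm2 (latpt a b k l)))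
         * cmod (u (tfshift (latpt a b k l) phi)) <= M)
  <->
  (forall lam : R, 0 < lam ->
     (\esum_(kl in [set kl : 'rV[int]_d * 'rV[int]_d | G (latpt a b kl.1 kl.2)])
        ((expR (lam * om (enorm2 (latpt a b kl.1 kl.2)))
          * cmod (u (tfshift (latpt a b kl.1 kl.2) phi)) ^+ 2)%:E) < +oo)%E).
Proof.
move=> [_ [_ [_ [_ [_ [[a0 [b0 [b0pos hg]]] _]]]]]] _ _ _ apos bpos _.
have cm0 : forall z : R[i], 0 <= cmod z by move=> z; exact: sqrtr_ge0.
split.
- move=> hsup lam lam0.
  pose nu : R := (4 * d)%:R / b0.
  have nu0 : 0 <= nu by rewrite divr_ge0 // ?ler0n // ltW.
  have nub : nu * b0 = (4 * d)%:R by rewrite /nu mulfVK // gt_eqF.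
  pose mu : R := (lam + nu) / 2.
  have mu0 : 0 < mu by rewrite /mu divr_gt0 // ltr_wpDr.
  have [M hM] := hsup mu mu0.
  pose cc : R := Num.min 1 (Num.min a b).
  have cc0 : 0 < cc by rewrite /cc !lt_min ltr01 apos bpos.
  have cc1 : cc <= 1 by rewrite /cc ge_min lexx.
  have cca : cc <= a by rewrite /cc !ge_min lexx orbT.
  have ccb : cc <= b by rewrite /cc !ge_min lexx !orbT.
  pose Q : R := ((4 / cc ^+ 2) ^+ 2) ^+ d.
  have Q0 : 0 < Q by rewrite /Q !exprn_gt0 // divr_gt0 // exprn_gt0.
  pose Cst : R := M ^+ 2 * expR (- (nu * a0)) * Q.
  apply: (@le_lt_trans _ _ Cst%:E); last exact: ltry.
  eapply (@esum_bound R _ _ _ (fun kl => (Pk R kl.1 kl.2)^-1)).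
  3: { move=> s us; have h := @seq_sum_bound R d s us; exact: h. }
  2: apply: mulr_ge0; [apply: mulr_ge0; [exact: sqr_ge0 | exact: expR_ge0] | exact: ltW].
  move=> [k l] /= Gkl.
  set t := enorm2 _; set w := om t; set c := cmod _.
  have t0 : 0 <= t by exact: enorm2_ge0.
  have h1 := key_exp (w := w) (lam := lam) (mu := mu) (nu := nu) (c := c) (M := M).
  have h1' : expR (lam * w) * c ^+ 2 <= M ^+ 2 * expR (- (nu * w)).
    apply: h1; [by rewrite /mu; field | exact: cm0 | exact: hM].
  apply: le_trans h1' _.
  have -> : Cst / Pk R k l = M ^+ 2 * (expR (- (nu * a0)) * (Q * (Pk R k l)^-1)).
    by rewrite /Cst !mulrA.
  apply: ler_wpM2l; first exact: sqr_ge0.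
  apply: le_trans (key_om nu0 nub (hg t t0) t0) _.
  apply: ler_wpM2l; first exact: expR_ge0.
  apply: key_P.
  + exact: Pk_gt0.
  + by apply: lt_le_trans ltr01 _; rewrite lerDl.
  + exact: Q0.
  + exact: Pk_bound.
- move=> hsum lam lam0.
  have l2 : 0 < 2 * lam by rewrite mulr_gt0.
  have hE := hsum _ l2.
  set E := esum _ _ in hE.
  have E0 : (0 <= E)%E by apply: esum_ge0 => x _; rewrite lee_fin mulr_ge0 ?expR_ge0 ?sqr_ge0.
  exists (Num.sqrt (fine E)) => k l Gkl.
  set w := om _; set c := cmod _.
  have le1 : ((expR (2 * lam * w) * c ^+ 2)%:E <= E)%E.
    apply: esum_ge; exists [set (k, l)]%classic.
      by split; [exact: finite_set1 | move=> y -> /=].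
    by rewrite fsbig_set1.
  have le2 : expR (2 * lam * w) * c ^+ 2 <= fine E.
    by rewrite -lee_fin fineK // ge0_fin_numE.
  rewrite -[X in X <= _]ger0_norm ?mulr_ge0 ?expR_ge0 ?cm0 //.
  rewrite -sqrtr_sqr ler_wsqrtr //.
  apply: le_trans le2; rewrite exprMn -expRM_natl.
  by rewrite mulrA.
Qed.
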